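(* If the ring $D(R_A)$ is simple, then the semigroup $\mathbb NA$ is scored.
   Context: $A\subset\mathbb Z^d$ is a finite set generating the group $\mathbb Z^d$; $R_A=\mathbb C[\mathbb NA]\subseteq\mathbb C[t_1^{\pm1},\dots,t_d^{\pm1}]$; $D(R_A)=\{P\in\mathbb C[t^{\pm1}]\langle\partial_1,\dots,\partial_d\rangle:P(R_A)\subseteq R_A\}$. For a facet $\sigma$ of the cone $\mathbb R_{\ge0}A$, $F_\sigma$ is the unique linear form with $F_\sigma(\mathbb R_{\ge0}A)\ge0$, $F_\sigma(\sigma)=0$, $F_\sigma(\mathbb Z^d)=\mathbb Z$. $\mathbb NA$ is scored if $\mathbb NA=\bigcap_{\sigma\text{ facet}}\{\mathbf a\in\mathbb Z^d:F_\sigma(\mathbf a)\in F_\sigma(\mathbb NA)\}$. Simple means no two-sided ideals other than $0$ and $D(R_A)$. *)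

(* Defs.v *)
From HB Require Import structures.
From mathcomp Require Import all_boot all_order all_algebra.
From mathcomp Require Import complex.
From mathcomp Require Import Rstruct.
Set Implicit Arguments. Unset Strict Implicit. Unset Printing Implicit Defensive.
Import Order.TTheory GRing.Theory Num.Theory.
Local Open Scope ring_scope.

Notation CC := (complex Rdefinitions.R).

(* Formal series  sum_u f(u) t^u  over Z^d (vectors u : 'rV[int]_d).
   Laurent polynomials C[t^{+-1}] are the finitely supported ones; the Weyl
   algebra with Laurent coefficients acts (faithfully) on all such series. *)
Definition ser (d : nat) := 'rV[int]_d -> CC.

Definition ev (d : nat) (i : 'I_d) : 'rV[int]_d := \row_(j < d) (j == i)%:R.

(* multiplication by the monomial t^a *)
Definition shift (d : nat) (a : 'rV[int]_d) (f : ser d) : ser d :=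
  fun u => f (u - a).

(* the partial derivative d/dt_i :  d_i t^v = v_i t^(v - e_i) *)
Definition pder (d : nat) (i : 'I_d) (f : ser d) : ser d :=
  fun u => ((u 0 i) + 1)%:~R * f (u + ev i).

Definition pderpow (d : nat) (b : 'I_d -> nat) (f : ser d) : ser d :=
  foldr (fun i g => iter (b i) (pder i) g) f (enum 'I_d).

(* P is (the action of) an element of C[t^{+-1}]<d_1,...,d_d>:
   a finite sum  sum c * t^a * d^beta. *)
Definition weyl_op (d : nat) (P : ser d -> ser d) : Prop :=
  exists s : seq (CC * 'rV[int]_d * ('I_d -> nat)),
    forall f u, P f u = \sum_(x <- s) x.1.1 * shift x.1.2 (pderpow x.2 f) u.

Definition in_NA (d : nat) (A : seq 'rV[int]_d) (u : 'rV[int]_d) : Prop :=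
  exists c : 'I_(size A) -> nat, u = \sum_(i < size A) A`_i *+ c i.

Definition generates_group (d : nat) (A : seq 'rV[int]_d) : Prop :=
  forall u : 'rV[int]_d,
    exists c : 'I_(size A) -> int, u = \sum_(i < size A) A`_i *~ c i.

Definition in_RA (d : nat) (A : seq 'rV[int]_d) (f : ser d) : Prop :=
  (exists s : seq 'rV[int]_d, forall u, f u != 0 -> u \in s) /\
  (forall u, f u != 0 -> in_NA A u).

Definition DRA (d : nat) (A : seq 'rV[int]_d) (P : ser d -> ser d) : Prop :=
  weyl_op P /\ forall f, in_RA A f -> in_RA A (P f).

Definition two_sided_ideal (d : nat) (A : seq 'rV[int]_d)
    (I : (ser d -> ser d) -> Prop) : Prop :=
  [/\ (forall P, I P -> DRA A P),
      I (fun _ _ => 0),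
      (forall P Q, I P -> I Q -> I (fun f u => P f u - Q f u)) &
      (forall P Q, DRA A P -> I Q ->
         I (fun f => P (Q f)) /\ I (fun f => Q (P f)))].

Definition DRA_simple (d : nat) (A : seq 'rV[int]_d) : Prop :=
  forall I, two_sided_ideal A I ->
    (forall P, I P -> P = (fun _ _ => 0)) \/ (forall P, DRA A P -> I P).

Definition lform (d : nat) (w u : 'rV[int]_d) : int :=
  \sum_(i < d) w 0 i * u 0 i.

(* w is the primitive linear form F_sigma of a facet sigma of the cone R_{>=0}A:
   F(Z^d) = Z, F >= 0 on A (hence on the cone), and the face
   sigma = cone /\ ker F, which is generated by the a in A with F(a) = 0,
   has dimension d-1. *)
Definition facet_form (d : nat) (A : seq 'rV[int]_d) (w : 'rV[int]_d) : Prop :=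
  [/\ (exists u, lform w u = 1),
      (forall a, a \in A -> 0 <= lform w a) &
      \rank (\matrix_(i < size A)
               (if lform w A`_i == 0
                then map_mx (fun z : int => z%:~R : rat) A`_i else 0)
             : 'M[rat]_(size A, d)) = d.-1].

Definition scored (d : nat) (A : seq 'rV[int]_d) : Prop :=
  forall u : 'rV[int]_d,
    in_NA A u <->
    (forall w, facet_form A w -> exists v, in_NA A v /\ lform w v = lform w u).

(* Main.v *)
Require Import Defs.
From HB Require Import structures.
From mathcomp Require Import all_boot all_order all_algebra.
From mathcomp Require Import complex.
From mathcomp Require Import Rstruct.
From mathcomp Require Import ring lra zify.
From Stdlib Require Import Classical.
Set Implicit Arguments. Unset Strict Implicit. Unset Printing Implicit Defensive.
Import Order.TTheory GRing.Theory Num.Theory.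
Local Open Scope ring_scope.

Section Farkas.
Variable d : nat.
Definition dotq (w x : 'rV[rat]_d) : rat := \sum_(i < d) w 0 i * x 0 i.

Lemma dotqE w x : dotq w x = (x *m w^T) 0 0.
Proof. rewrite /dotq !mxE; apply: eq_bigr => i _; by rewrite !mxE mulrC. Qed.

Lemma dotqDr w x y : dotq w (x + y) = dotq w x + dotq w y.
Proof. rewrite /dotq -big_split; apply: eq_bigr => i _; by rewrite mxE mulrDr. Qed.
Lemma dotqDl w v x : dotq (w + v) x = dotq w x + dotq v x.
Proof. rewrite /dotq -big_split; apply: eq_bigr => i _; by rewrite mxE mulrDl. Qed.
Lemma dotqZr w c x : dotq w (c *: x) = c * dotq w x.
Proof. rewrite /dotq mulr_sumr; apply: eq_bigr => i _; by rewrite mxE mulrCA. Qed.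
Lemma dotqZl w c x : dotq (c *: w) x = c * dotq w x.
Proof. rewrite /dotq mulr_sumr; apply: eq_bigr => i _; by rewrite mxE mulrA. Qed.
Lemma dotqNr w x : dotq w (- x) = - dotq w x.
Proof. by rewrite -scaleN1r dotqZr mulN1r. Qed.
Lemma dotqNl w x : dotq (- w) x = - dotq w x.
Proof. by rewrite -scaleN1r dotqZl mulN1r. Qed.
Lemma dotqBr w x y : dotq w (x - y) = dotq w x - dotq w y.
Proof. by rewrite dotqDr dotqNr. Qed.
Lemma dotqBl w v x : dotq (w - v) x = dotq w x - dotq v x.
Proof. by rewrite dotqDl dotqNl. Qed.
Lemma dotq0r w : dotq w 0 = 0.
Proof. by rewrite /dotq big1 // => i _; rewrite mxE mulr0. Qed.
Lemma dotq_sumr w n (F : nat -> 'rV[rat]_d) :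
  dotq w (\sum_(0 <= i < n) F i) = \sum_(0 <= i < n) dotq w (F i).
Proof.
elim: n => [|n IH]; first by rewrite !big_nil dotq0r.
by rewrite !big_nat_recr //= dotqDr IH.
Qed.

Definition coneq (B : seq 'rV[rat]_d) x :=
  exists l : nat -> rat, (forall i, 0 <= l i) /\ x = \sum_(0 <= i < size B) l i *: B`_i.

Lemma farkas n : forall B, size B = n -> forall x, ~ coneq B x ->
  exists w, (forall b, b \in B -> 0 <= dotq w b) /\ dotq w x < 0.
Proof.
elim: n => [|n IH] B.
  move/eqP; rewrite size_eq0 => /eqP -> x ncx.
  have x0 : x != 0.
    apply/eqP => x0; apply: ncx; exists (fun _ => 0); split => // .
    by rewrite big_nil.
  exists (- x); split => //.
  rewrite dotqNl oppr_lt0 /dotq.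
  have [j xj] : exists j, x 0 j != 0.
    apply/existsP; apply: contraR x0; rewrite negb_exists => /forallP H.
    by apply/eqP/rowP => j; rewrite mxE; apply/eqP; move: (H j); rewrite negbK.
  rewrite (bigD1 j) //= ltr_wpDr //; first by apply: sumr_ge0 => i _; rewrite -expr2 sqr_ge0.
  by rewrite -expr2 lt_def sqr_ge0 andbT sqrf_eq0.
case: B => [//|a B] /= [sB] x ncx.
have ncx' : ~ coneq B x.
  move=> [l [l0 xe]]; apply: ncx.
  exists (fun i => if i is j.+1 then l j else 0); split; first by case.
  by rewrite /= big_nat_recl //= scale0r add0r.
have [w [wB wx]] := IH B sB x ncx'.
have [wa0|] := leP 0 (dotq w a).
  exists w; split => // b; rewrite inE => /orP [/eqP -> //|]; exact: wB.
move=> wa_neg.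
set wa := dotq w a.
pose pi y := y - (dotq w y / wa) *: a.
have ncpi : ~ coneq (map pi B) (pi x).
  move=> [mu [mu0 pie]]; apply: ncx.
  pose lam := (dotq w x - \sum_(0 <= i < size B) mu i * dotq w B`_i) / wa.
  exists (fun i => if i is j.+1 then mu j else lam); split.
    case => // ; rewrite /lam ler_ndivlMr // mul0r subr_le0.
    apply: le_trans (ltW wx) _; apply: sumr_ge0 => i _; rewrite mulr_ge0 //.
    case: (ltnP i (size B)) => iB; first by apply: wB; rewrite mem_nth.
    by rewrite nth_default // dotq0r.
  rewrite /= big_nat_recl //=.
  have : x = pi x + (dotq w x / wa) *: a by rewrite /pi subrK.
  move=> ->; rewrite pie size_map.
  have -> : \sum_(0 <= i < size B) mu i *: (map pi B)`_i =
     \sum_(0 <= i < size B) mu i *: B`_i -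
     (\sum_(0 <= i < size B) mu i * dotq w B`_i / wa) *: a.
    rewrite scaler_suml -sumrB; apply: eq_big_nat => i /andP [_ iB].
    by rewrite (nth_map 0) // /pi scalerBr scalerA mulrA.
  rewrite [RHS]addrC -addrA; congr (_ + _).
  rewrite -scaleNr -scalerDl /lam; congr (_ *: _).
  by rewrite addrC mulrBl -mulr_suml.
have szpi : size (map pi B) = n by rewrite size_map.
have [w' [w'B w'x]] := IH (map pi B) szpi (pi x) ncpi.
pose w'' := w' - (dotq w' a / wa) *: w.
have key y : dotq w'' y = dotq w' (pi y).
  rewrite /w'' /pi dotqBl dotqZl dotqBr dotqZr.
  by congr (_ - _); ring.
exists w''; split; last by rewrite key.
move=> b; rewrite inE => /orP [/eqP ->|bB].
  rewrite key /pi mulfV ?scale1r ?subrr ?dotq0r //.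
  by rewrite lt_eqF.
by rewrite key; apply: w'B; rewrite map_f.
Qed.
End Farkas.

Section Improve.
Variable d : nat.
Variable A : seq 'rV[int]_d.
Definition Aq (i : nat) : 'rV[rat]_d := map_mx (fun z : int => z%:~R : rat) A`_i.
Definition Zq (w : 'rV[rat]_d) : 'M[rat]_(size A, d) :=
  \matrix_(i < size A) (if dotq w (Aq i) == 0 then Aq i else 0).

Lemma row_Zq w (i : 'I_(size A)) : row i (Zq w) = if dotq w (Aq i) == 0 then Aq i else 0.
Proof. by rewrite rowK. Qed.

Lemma mulmx_tr_entry m (M : 'M[rat]_(m, d)) v i : (M *m v^T) i 0 = dotq v (row i M).
Proof. by rewrite dotqE -row_mul [in RHS]mxE. Qed.

Lemma Zq_orth w : Zq w *m w^T = 0.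
Proof.
apply/matrixP => i j; rewrite (ord1 j) mulmx_tr_entry row_Zq mxE.
by case: ifP => [/eqP //|_]; rewrite dotq0r.
Qed.

Lemma rank_Zq_le w : w != 0 -> (\rank (Zq w) <= d.-1)%N.
Proof.
move=> w0; have := mulmx0_rank_max (Zq_orth w).
rewrite mxrank_tr rank_rV w0 addn1 => h.
move: h; set r := \rank _; lia.
Qed.

Hypothesis span : forall v : 'rV[rat]_d,
  (forall i : 'I_(size A), dotq v (Aq i) = 0) -> v = 0.

Lemma improve_step x w : (forall i : 'I_(size A), 0 <= dotq w (Aq i)) ->
  dotq w x < 0 -> (\rank (Zq w) < d.-1)%N ->
  exists w', [/\ (forall i : 'I_(size A), 0 <= dotq w' (Aq i)), dotq w' x < 0 &
     (\rank (Zq w) < \rank (Zq w'))%N].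
Proof.
move=> wA wx rk.
pose M := col_mx (Zq w) x.
have rkM : (\rank M < d)%N.
  rewrite /M -(addsmxE (Zq w) x).1.
  have h := (mxrank_adds_leqif (Zq w) x).1.
  have h2 := rank_leq_row x.
  move: h h2 rk; set r1 := \rank (_ + _)%MS; set r2 := \rank (Zq w); set r3 := \rank x; lia.
pose K := kermx M^T.
have K0 : K != 0.
  by rewrite -mxrank_eq0 mxrank_ker mxrank_tr -lt0n subn_gt0.
have [i rowi] : exists i, row i K != 0.
  apply/existsP; apply: contraR K0; rewrite negb_exists => /forallP H.
  apply/eqP/row_matrixP => i; rewrite row0; apply/eqP; move: (H i); by rewrite negbK.
pose v := row i K.
have vM : M *m v^T = 0.
  by rewrite -[M]trmxK -trmx_mul /v -row_mul mulmx_ker row0 trmx0.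
have [vZ vx] : Zq w *m v^T = 0 /\ x *m v^T = 0.
  by move: vM; rewrite /M mul_col_mx => /eqP; rewrite col_mx_eq0 => /andP [/eqP -> /eqP ->].
have [i0 vi0] : exists i0 : 'I_(size A), dotq v (Aq i0) != 0.
  apply/existsP; apply: contraR rowi; rewrite negb_exists => /forallP H.
  by apply/eqP/span => j; move: (H j); rewrite negbK => /eqP.
pose v' := if dotq v (Aq i0) < 0 then v else - v.
have v'Z : Zq w *m v'^T = 0.
  by rewrite /v'; case: ifP => _ //; rewrite linearN /= mulmxN vZ oppr0.
have v'x : dotq v' x = 0.
  rewrite dotqE /v'; case: ifP => _; first by rewrite vx mxE.
  by rewrite linearN /= mulmxN vx oppr0 mxE.
have v'i0 : dotq v' (Aq i0) < 0.
  rewrite /v'; case: ifP => // /negbT; rewrite dotqNl -leNgt oppr_lt0 le_eqVlt.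
  by rewrite eq_sym (negbTE vi0).
have orth (k : 'I_(size A)) : dotq w (Aq k) = 0 -> dotq v' (Aq k) = 0.
  move=> h; have := congr1 (fun N : 'M[rat]_(size A, 1) => N k 0) v'Z.
  by rewrite mulmx_tr_entry row_Zq h eqxx mxE.
pose P := fun k : 'I_(size A) => dotq v' (Aq k) < 0.
pose F := fun k : 'I_(size A) => dotq w (Aq k) / (- dotq v' (Aq k)).
have [j Pj jmin] := arg_minP F (v'i0 : P i0).
pose t := F j.
have t0 : 0 <= t by rewrite /t /F divr_ge0 // oppr_ge0 ltW.
pose w' := w + t *: v'.
exists w'; split.
- move=> k; rewrite /w' dotqDl dotqZl.
  have [Pk|] := ltP (dotq v' (Aq k)) 0.
    have := jmin k Pk; rewrite -/t /F ler_pdivlMr ?oppr_gt0 //.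
    by rewrite mulrN lerNl -subr_ge0 opprK addrC.
  by move=> vk; rewrite addr_ge0 // mulr_ge0.
- by rewrite /w' dotqDl dotqZl v'x mulr0 addr0.
- apply: rank_ltmx; rewrite ltmxE; apply/andP; split.
    apply/row_subP => k; rewrite row_Zq; case: ifP => [/eqP h|]; last by rewrite sub0mx.
    have : row k (Zq w') = Aq k by rewrite row_Zq /w' dotqDl dotqZl h orth // mulr0 addr0 eqxx.
    by move=> <-; rewrite row_sub.
  have jw' : row j (Zq w') = Aq j.
    rewrite row_Zq /w' dotqDl dotqZl /t /F ifT //.
    rewrite invrN mulrN mulNr -mulrA mulVf ?mulr1 ?subrr //.
    by rewrite lt_eqF.
  apply/negP => sub.
  have : (Aq j <= Zq w)%MS by rewrite -jw' (submx_trans (row_sub j _) sub).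
  case/submxP => D DE.
  move: Pj; rewrite /P dotqE DE -mulmxA v'Z mulmx0 mxE ltxx //.
Qed.

Lemma facet_improve n : forall x w, (d - \rank (Zq w) <= n)%N ->
  (forall i : 'I_(size A), 0 <= dotq w (Aq i)) -> dotq w x < 0 ->
  exists w', [/\ (forall i : 'I_(size A), 0 <= dotq w' (Aq i)), dotq w' x < 0 &
     \rank (Zq w') = d.-1].
Proof.
elim: n => [|n IH] x w hn wA wx.
  have w0 : w != 0 by apply: contraTneq wx => ->; rewrite /dotq big1 ?ltxx // => i _; rewrite mxE mul0r.
  have h2 := rank_Zq_le w0.
  have e : \rank (Zq w) = d.-1 by move: hn h2; set r := \rank _; lia.
  by exists w.
have w0 : w != 0 by apply: contraTneq wx => ->; rewrite /dotq big1 ?ltxx // => i _; rewrite mxE mul0r.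
have [e|ne] := eqVneq (\rank (Zq w)) d.-1; first by exists w.
have lt : (\rank (Zq w) < d.-1)%N by rewrite ltn_neqAle ne rank_Zq_le.
have [w' [w'A w'x rk']] := improve_step wA wx lt.
apply: (IH x w') => //.
have h2 := rank_Zq_le w0.
move: hn rk' lt h2; set r := \rank (Zq w); set r' := \rank (Zq w'); lia.
Qed.
End Improve.

Lemma mxzE (R : zmodType) m n (M : 'M[R]_(m, n)) (c : int) i j :
  (M *~ c) i j = M i j *~ c.
Proof.
case: c => k; first by rewrite mulmxnE.
by rewrite NegzE !mulrNz mxE mulmxnE.
Qed.

Lemma clear_den n (r : 'I_n -> rat) :
  exists D : int, 0 < D /\ exists z : 'I_n -> int, forall i, (z i)%:~R = D%:~R * r i.
Proof.
exists (\prod_i denq (r i)); split; first by apply: prodr_gt0 => i _; exact: denq_gt0.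
exists (fun i => numq (r i) * \prod_(j | j != i) denq (r j)) => i.
rewrite [in RHS](bigD1 i) //= !intrM numqE; ring.
Qed.

Lemma lform_comb d (z : 'rV[int]_d) k :
  exists g : int, exists u, lform z u = g /\ forall j : 'I_d, (j < k)%N -> (g %| z 0%R j)%Z.
Proof.
elim: k => [|k [g [u [ug gdiv]]]].
  by exists 0, 0; split => //; rewrite /lform big1 // => i _; rewrite mxE mulr0.
case: (ltnP k d) => kd; last first.
  exists g, u; split => // j jk; apply: gdiv; apply: leq_trans (ltn_ord j) kd.
pose kk := Ordinal kd.
have [a [b ab]] := Bezoutz g (z 0 kk).
exists (gcdz g (z 0 kk)), (\row_j (a * u 0 j + b * (j == kk)%:R)); split.
  rewrite -ab -ug /lform.
  rewrite (eq_bigr (fun j => a * (z 0 j * u 0 j) + b * (z 0 j * (j == kk)%:R))); last first.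
    by move=> j _; rewrite mxE; ring.
  rewrite big_split /= -!mulr_sumr; congr (_ + _).
  rewrite (bigD1 kk) //= eqxx mulr1 big1 ?addr0 // => j /negbTE ->; by rewrite mulr0.
move=> j; rewrite ltnS leq_eqVlt => /orP [/eqP jk|jk].
  have -> : j = kk by apply: val_inj.
  exact: dvdz_gcdr.
exact: dvdz_trans (dvdz_gcdl _ _) (gdiv j jk).
Qed.

Lemma primitive d (z : 'rV[int]_d) : z != 0 ->
  exists g : int, 0 < g /\ exists F : 'rV[int]_d,
    (forall k, z 0 k = g * F 0 k) /\ exists u, lform F u = 1.
Proof.
move=> z0.
have [g0 [u0 [ug0 gdiv0]]] := lform_comb z d.
have gdiv : forall j : 'I_d, (g0 %| z 0%R j)%Z by move=> j; apply: gdiv0.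
have g00 : g0 != 0.
  apply: contraNneq z0 => g0E; apply/eqP/rowP => j; rewrite mxE.
  by apply/eqP; rewrite -dvd0z -g0E.
pose g : int := (`|g0|%N)%:Z.
have gdivA : forall j : 'I_d, (g %| z 0%R j)%Z by move=> j; rewrite dvdzE /=; exact: gdiv.
have g0p : 0 < g by rewrite /g ltz_nat absz_gt0.
have [u ug] : exists u, lform z u = g.
  case: (leP 0 g0) => h.
    by exists u0; rewrite ug0 /g abszE ger0_norm.
  exists (- u0); rewrite /lform.
  rewrite (eq_bigr (fun i => - (z 0 i * u0 0 i))); last by move=> i _; rewrite mxE mulrN.
  by rewrite sumrN -/(lform z u0) ug0 /g abszE ltr0_norm.
exists g; split => //.
exists (\row_k ((z 0%R k) %/ g)%Z); split.
  by move=> k; rewrite mxE mulrC divzK.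
exists u; apply: (mulfI (lt0r_neq0 g0p)); rewrite mulr1 -[in RHS]ug /lform mulr_sumr.
by apply: eq_bigr => i _; rewrite mxE mulrA [g * _]mulrC divzK.
Qed.

Definition coneA d (A : seq 'rV[int]_d) (x : 'rV[int]_d) :=
  exists l : nat -> rat, (forall i, 0 <= l i) /\
    map_mx (fun z : int => z%:~R : rat) x = \sum_(0 <= i < size A) l i *: Aq A i.

Lemma dotq_int d (v : 'rV[rat]_d) (y : 'rV[int]_d) :
  dotq v (map_mx (fun z : int => z%:~R : rat) y) = \sum_k v 0 k * (y 0 k)%:~R.
Proof. by apply: eq_bigr => k _; rewrite mxE. Qed.

Lemma dotq_comb d (A : seq 'rV[int]_d) (c : 'I_(size A) -> int) v :
  dotq v (map_mx (fun z : int => z%:~R : rat) (\sum_(i < size A) A`_i *~ c i)) =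
  \sum_(i < size A) (c i)%:~R * dotq v (Aq A i).
Proof.
rewrite dotq_int /dotq.
under eq_bigr do rewrite summxE rmorph_sum mulr_sumr.
rewrite exchange_big /=; apply: eq_bigr => i _; rewrite mulr_sumr.
by apply: eq_bigr => k _; rewrite mxzE mulrzz intrM !mxE; ring.
Qed.

Lemma span_of_gen d (A : seq 'rV[int]_d) : generates_group A ->
  forall v : 'rV[rat]_d, (forall i : 'I_(size A), dotq v (Aq A i) = 0) -> v = 0.
Proof.
move=> gen v vA; apply/rowP => j.
have [c ce] := gen (ev j).
have := dotq_comb c v; rewrite -ce big1; last by move=> i _; rewrite vA mulr0.
rewrite dotq_int (bigD1 j) //= big1 ?addr0; first by rewrite !mxE eqxx mulr1 => ->.
by move=> k /negbTE kj; rewrite !mxE kj mulr0.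
Qed.

Lemma facet_exists d (A : seq 'rV[int]_d) : generates_group A ->
  forall x : 'rV[int]_d, ~ coneA A x -> exists F, facet_form A F /\ lform F x < 0.
Proof.
move=> gen x ncx.
have span := span_of_gen gen.
pose B := map (map_mx (fun z : int => z%:~R : rat)) A.
have BE i : (i < size A)%N -> B`_i = Aq A i by move=> iA; rewrite (nth_map 0).
have ncB : ~ coneq B (map_mx (fun z : int => z%:~R : rat) x).
  move=> [l [l0 xe]]; apply: ncx; exists l; split => //; rewrite xe size_map.
  by apply: eq_big_nat => i /andP [_ iA]; rewrite BE.
have [w [wB wx]] := farkas (erefl (size B)) ncB.
have wA : forall i : 'I_(size A), 0 <= dotq w (Aq A i).
  by move=> i; rewrite -BE //; apply: wB; rewrite mem_nth // size_map.
have [w' [w'A w'x rk]] := facet_improve span (leq_subr (\rank (Zq A w)) d) wA wx.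
have w'0 : w' != 0.
  by apply: contraTneq w'x => ->; rewrite /dotq big1 ?ltxx // => i _; rewrite mxE mul0r.
have [D [D0 [zf zE]]] := clear_den (fun k : 'I_d => w' 0 k).
pose z : 'rV[int]_d := \row_k zf k.
have z0 : z != 0.
  apply: contraNneq w'0 => zz; apply/eqP/rowP => k; rewrite mxE.
  have := zE k; have -> : zf k = z 0 k by rewrite mxE.
  rewrite zz mxE => /esym /eqP; rewrite mulf_eq0 intr_eq0 (gt_eqF D0) /= => /eqP //.
have [g [g0 [F [zF [u uF]]]]] := primitive z0.
pose c : rat := D%:~R / g%:~R.
have c0 : 0 < c by rewrite /c divr_gt0 // ltr0z.
have FE k : (F 0 k)%:~R = c * w' 0 k.
  have := zE k; have -> : zf k = z 0 k by rewrite mxE.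
  rewrite zF => e0; have e : (g%:~R * (F 0 k)%:~R : rat) = D%:~R * w' 0 k by rewrite -intrM; exact: e0.
  rewrite /c mulrAC -e mulrC mulrA mulVf ?mul1r //.
  by rewrite intr_eq0 gt_eqF.
have lformE y : (lform F y)%:~R = c * dotq w' (map_mx (fun z : int => z%:~R : rat) y).
  rewrite /lform rmorph_sum dotq_int mulr_sumr; apply: eq_bigr => k _.
  by rewrite rmorphM /= FE mulrA.
exists F; split; last by rewrite -(ltrz0 rat) lformE pmulr_rlt0.
split.
- by exists u.
- move=> a aA; rewrite -(ler0z rat) lformE pmulr_rge0 //.
  have ia : (index a A < size A)%N by rewrite index_mem.
  by have := w'A (Ordinal ia); rewrite /= /Aq nth_index.
- rewrite -rk; congr (\rank _); apply/row_matrixP => i; rewrite /Zq !rowK.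
  by rewrite -(intr_eq0 rat) lformE mulf_eq0 (gt_eqF c0).
Qed.

Lemma in_NA_of d (A : seq 'rV[int]_d) (k : 'I_(size A) -> int) :
  (forall i, 0 <= k i) -> in_NA A (\sum_(i < size A) A`_i *~ k i).
Proof.
move=> k0; exists (fun i => `|k i|%N); apply: eq_bigr => i _.
by rewrite pmulrn gez0_abs.
Qed.

Lemma conductor d (A : seq 'rV[int]_d) : generates_group A ->
  exists b, in_NA A b /\ forall x, coneA A x -> in_NA A (x + b).
Proof.
move=> gen.
have [C hC] : exists C : 'I_d -> 'I_(size A) -> int,
    forall j, ev j = \sum_(i < size A) A`_i *~ C j i.
  apply: (@fin_all_exists _ (fun _ => 'I_(size A) -> int) (fun j c => ev j = \sum_(i < size A) A`_i *~ c i)) => j; exact: gen.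
pose M (j : 'I_d) : int := \sum_(i < size A) `|A`_i 0 j|.
pose N : int := \sum_(j < d) \sum_(i < size A) M j * `|C j i|.
have N0 : 0 <= N by apply: sumr_ge0 => j _; apply: sumr_ge0 => i _; 
  rewrite mulr_ge0 // sumr_ge0.
exists (\sum_(i < size A) A`_i *~ N); split; first exact: in_NA_of.
move=> x [l [l0 xe]].
pose f i := Num.floor (l i).
pose r := x - \sum_(i < size A) A`_i *~ f i.
have xq j : (x 0 j)%:~R = \sum_(i < size A) l i * (A`_i 0 j)%:~R.
  have := congr1 (fun v : 'rV[rat]_d => v 0 j) xe; rewrite /= mxE => ->.
  by rewrite big_mkord summxE; apply: eq_bigr => i _; rewrite !mxE.
have rq j : (r 0 j)%:~R = \sum_(i < size A) (l i - (f i)%:~R) * (A`_i 0 j)%:~R.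
  rewrite !mxE summxE intrB xq rmorph_sum -sumrB; apply: eq_bigr => i _.
  rewrite mxzE mulrzz rmorphM /=; ring.
have fl i : 0 <= l i - (f i)%:~R < 1.
  have /andP [h1 h2] := floor_itv (l i).
  by rewrite subr_ge0 h1 /= ltrBlDl; move: h2; rewrite intrD.
have rb j : `|r 0 j| <= M j.
  rewrite -(ler_int rat) intr_norm rq /M rmorph_sum /=.
  apply: le_trans (ler_norm_sum _ _ _) _; apply: ler_sum => i _.
  rewrite normrM intr_norm /=.
  have /andP [h1 h2] := fl i.
  by rewrite ler_piMl // ger0_norm // ltW.
pose s i := \sum_(j < d) r 0 j * C j i.
have rE : r = \sum_(i < size A) A`_i *~ s i.
  have r1 : r = \sum_(j < d) ev j *~ r 0 j.
    apply/rowP => k; rewrite summxE (bigD1 k) //= big1 ?addr0.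
      by rewrite mxzE /ev !mxE eqxx mulrzz mul1r.
    by move=> j /negbTE jk; rewrite mxzE /ev [(\row_j _) _ _]mxE eq_sym jk mulrzz mul0r.
  rewrite [LHS]r1; under eq_bigr do rewrite hC mulrz_suml.
  rewrite exchange_big /=; apply: eq_bigr => i _; rewrite /s mulrz_sumr.
  by apply: eq_bigr => j _; rewrite -mulrzA mulrC.
have sb i : `|s i| <= N.
  apply: le_trans (ler_norm_sum _ _ _) _.
  apply: (@le_trans _ _ (\sum_(j < d) M j * `|C j i|)).
    by apply: ler_sum => j _; rewrite normrM ler_wpM2r.
  apply: ler_sum => j _; rewrite (bigD1 i) //= lerDl sumr_ge0 // => k _.
  by rewrite mulr_ge0 // sumr_ge0.
have fi0 i : 0 <= f i by rewrite floor_ge0 l0.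
have xE : x + \sum_(i < size A) A`_i *~ N =
    \sum_(i < size A) A`_i *~ (f i + s i + N).
  rewrite -[x](subrK (\sum_(i < size A) A`_i *~ f i)) -/r rE -!big_split.
  by apply: eq_bigr => i _; rewrite !mulrzDr /=; congr (_ + _); exact: addrC.
rewrite xE; apply: in_NA_of => i.
have := sb i; rewrite ler_norml => /andP [h1 _].
have := fi0 i; lia.
Qed.

Section Lform.
Variable d : nat.
Implicit Types w x y : 'rV[int]_d.
Lemma lformD w x y : lform w (x + y) = lform w x + lform w y.
Proof. rewrite /lform -big_split; apply: eq_bigr => i _; by rewrite mxE mulrDr. Qed.
Lemma lform0 w : lform w 0 = 0.
Proof. by rewrite /lform big1 // => i _; rewrite mxE mulr0. Qed.
Lemma lformN w x : lform w (- x) = - lform w x.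
Proof. rewrite /lform -sumrN; apply: eq_bigr => i _; by rewrite mxE mulrN. Qed.
Lemma lformB w x y : lform w (x - y) = lform w x - lform w y.
Proof. by rewrite lformD lformN. Qed.
Lemma lformMn w x n : lform w (x *+ n) = lform w x *+ n.
Proof. elim: n => [|n IH]; by rewrite ?mulr0n ?lform0 // !mulrS lformD IH. Qed.
Lemma lformMz w x (c : int) : lform w (x *~ c) = lform w x * c.
Proof.
case: c => n; first by rewrite -pmulrn lformMn pmulrn mulrzz.
by rewrite NegzE mulrNz -pmulrn lformN lformMn mulrN pmulrn mulrzz.
Qed.
Lemma lform_sum w I (r : seq I) (F : I -> 'rV[int]_d) :
  lform w (\sum_(i <- r) F i) = \sum_(i <- r) lform w (F i).
Proof.
elim: r => [|a r IH]; first by rewrite !big_nil lform0.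
by rewrite !big_cons lformD IH.
Qed.
End Lform.

Lemma lform_NA_ge0 d (A : seq 'rV[int]_d) F v :
  (forall a, a \in A -> 0 <= lform F a) -> in_NA A v -> 0 <= lform F v.
Proof.
move=> FA [c ->]; rewrite lform_sum; apply: sumr_ge0 => i _.
by rewrite lformMn mulrn_wge0 // FA // mem_nth.
Qed.

Lemma scored_in_cone d (A : seq 'rV[int]_d) : generates_group A ->
  forall u, (forall w, facet_form A w -> exists v, in_NA A v /\ lform w v = lform w u) ->
  coneA A u.
Proof.
move=> gen u H; apply: Classical_Prop.NNPP => nc.
have [F [fF Fu]] := facet_exists gen nc.
have [v [vNA vE]] := H F fF.
case: fF => _ FA _.
have := lform_NA_ge0 FA vNA; rewrite vE => h.
by move: Fu; rewrite ltNge h.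
Qed.

Notation iq := (fun z : int => z%:~R : rat).

Lemma lform_mx d (F y : 'rV[int]_d) :
  (map_mx (fun z : int => z%:~R : rat) y *m (map_mx (fun z : int => z%:~R : rat) F)^T) 0 0
  = (lform F y)%:~R.
Proof.
rewrite mxE /lform rmorph_sum /=; apply: eq_bigr => k _.
by rewrite !mxE rmorphM /= mulrC.
Qed.

Lemma finite_index d (A : seq 'rV[int]_d) F : facet_form A F ->
  forall x : 'rV[int]_d, lform F x = 0 ->
  exists m : nat, (0 < m)%N /\ exists z : 'I_(size A) -> int,
    (forall i : 'I_(size A), lform F A`_i != 0 -> z i = 0) /\ x *+ m = \sum_(i < size A) A`_i *~ z i.
Proof.
move=> [[u Fu] FA rk] x Fx.
pose Zm : 'M[rat]_(size A, d) :=
  \matrix_(i < size A) (if lform F A`_i == 0 then map_mx iq A`_i else 0).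
have rk' : \rank Zm = d.-1 by exact: rk.
pose Fq := map_mx iq F.
pose xq := map_mx iq x.
have ZF : Zm *m Fq^T = 0.
  apply/matrixP => i j; rewrite (ord1 j).
  have -> : (Zm *m Fq^T) i 0 = (row i Zm *m Fq^T) 0 0 by rewrite -row_mul [RHS]mxE.
  rewrite rowK [RHS]mxE.
  case: ifP => [/eqP h|_]; first by rewrite [LHS]lform_mx h.
  by rewrite mul0mx mxE.
have xF : xq *m Fq^T = 0.
  by apply/rowP => j; rewrite (ord1 j) [LHS]lform_mx Fx mxE.
pose M := col_mx Zm xq.
have MF : M *m Fq^T = 0 by rewrite /M mul_col_mx ZF xF col_mx0.
have Fq0 : Fq != 0.
  apply/eqP => F0; move: Fu; rewrite /lform big1 // => k _.
  have : Fq 0 k = 0 by rewrite F0 mxE.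
  by rewrite mxE => /eqP; rewrite intr_eq0 => /eqP ->; rewrite mul0r.
have rkM : (\rank M <= d.-1)%N.
  have := mulmx0_rank_max MF; rewrite mxrank_tr rank_rV Fq0.
  move=> h; move: h; set r := \rank M; lia.
have ZM : (Zm <= M)%MS by rewrite /M -((addsmxE Zm xq).2 _ Zm).2 addsmxSl.
have MZ : (M <= Zm)%MS.
  have := mxrank_leqif_sup ZM; move=> [_ <-].
  by rewrite eqn_leq rk' rkM andbT -rk' (mxrank_leqif_sup ZM).
have xZ : (xq <= Zm)%MS.
  apply: submx_trans MZ; by rewrite /M -((addsmxE Zm xq).2 _ xq).2 addsmxSr.
have [r rE] := submxP xZ.
have [D [D0 [zf zE]]] := clear_den (fun i : 'I_(size A) => r 0 i).
exists `|D|%N; split; first by rewrite absz_gt0 gt_eqF.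
exists (fun i : 'I_(size A) => if lform F A`_i == 0 then zf i else 0); split.
  by move=> i /negbTE ->.
apply/rowP => k; apply: (@intr_inj rat).
have := congr1 (fun v : 'rV[rat]_d => v 0 k) rE; rewrite /= !mxE => xk.
have Dn : (`|D|%N%:R : rat) = D%:~R by rewrite natr_absz ger0_norm // ltW.
rewrite mulmxnE rmorphMn /= -mulr_natr Dn xk mulr_suml summxE rmorph_sum /=.
apply: eq_bigr => j _; rewrite mxzE mulrzz /Zm !mxE.
case: ifP => _; last by rewrite !mxE mulr0 mul0r mulr0.
by rewrite mxE rmorphM /= zE; ring.
Qed.

Section Closed.
Variable d : nat.

Definition cb (b : 'I_d -> nat) (u : 'rV[int]_d) : CC :=
  \prod_(i < d) \prod_(k < b i) ((u 0 i + (k.+1)%:Z)%:~R).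
Definition bv (b : 'I_d -> nat) : 'rV[int]_d := \row_i ((b i)%:Z).

Lemma ev_entry (i j : 'I_d) : ev i 0 j = (j == i)%:R.
Proof. by rewrite mxE. Qed.

Lemma iter_pder (i : 'I_d) n (g : ser d) u :
  iter n (pder i) g u = (\prod_(k < n) ((u 0 i + (k.+1)%:Z)%:~R)) * g (u + ev i *+ n).
Proof.
elim: n u => [|n IH] u; first by rewrite big_ord0 mul1r mulr0n addr0.
rewrite iterS /pder IH big_ord_recl /= -mulrA; congr (_ * _).
congr (_ * _).
  apply: eq_bigr => k _; rewrite mxE ev_entry eqxx; congr (_%:~R).
  rewrite /bump /= add1n; lia.
by rewrite mulrS addrA.
Qed.

Lemma foldr_pder (b : 'I_d -> nat) (l : seq 'I_d) (f : ser d) u : uniq l ->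
  foldr (fun i g => iter (b i) (pder i) g) f l u =
  (\prod_(i <- l) \prod_(k < b i) ((u 0 i + (k.+1)%:Z)%:~R)) *
  f (u + \sum_(i <- l) ev i *+ b i).
Proof.
elim: l u => [|i l IH] u /=; first by rewrite !big_nil mul1r addr0.
move=> /andP [il ul].
rewrite iter_pder IH // big_cons -mulrA; congr (_ * _); congr (_ * _).
  rewrite big_seq_cond [RHS]big_seq_cond; apply: eq_bigr => j /andP [jl _].
  apply: eq_bigr => k _; rewrite mxE mulmxnE ev_entry.
  have -> : (j == i) = false by apply/eqP => ji; move: il; rewrite -ji jl.
  by rewrite mul0rn addr0.
by rewrite big_cons addrA.
Qed.

Lemma pderpow_cf (b : 'I_d -> nat) (f : ser d) u :
  pderpow b f u = cb b u * f (u + bv b).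
Proof.
rewrite /pderpow foldr_pder ?enum_uniq // /cb big_enum /=; congr (_ * f (u + _)).
apply/rowP => j; rewrite summxE mxE big_enum /=.
rewrite (bigD1 j) //= big1 ?addr0; first by rewrite mulmxnE ev_entry eqxx natz; lia.
by move=> k /negbTE kj; rewrite mulmxnE ev_entry eq_sym kj mul0rn.
Qed.
End Closed.

Section Weyl.
Variable d : nat.
Definition term (x : CC * 'rV[int]_d * ('I_d -> nat)) (f : ser d) (u : 'rV[int]_d) : CC :=
  x.1.1 * shift x.1.2 (pderpow x.2 f) u.

Lemma term_cf x f u :
  term x f u = x.1.1 * cb x.2 (u - x.1.2) * f (u - x.1.2 + bv x.2).
Proof. by rewrite /term /shift pderpow_cf mulrA. Qed.

Lemma W_ext (P Q : ser d -> ser d) :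
  (forall f u, P f u = Q f u) -> weyl_op Q -> weyl_op P.
Proof. by move=> PQ [s hs]; exists s => f u; rewrite PQ hs. Qed.

Lemma W_zero : weyl_op (fun (_ : ser d) (_ : 'rV[int]_d) => 0 : CC).
Proof. by exists [::] => f u; rewrite big_nil. Qed.

Lemma W_add (P Q : ser d -> ser d) : weyl_op P -> weyl_op Q ->
  weyl_op (fun f u => P f u + Q f u).
Proof.
move=> [s hs] [s' hs']; exists (s ++ s') => f u.
by rewrite big_cat /= hs hs'.
Qed.

Lemma W_scale_shift (c : CC) (a : 'rV[int]_d) (P : ser d -> ser d) : weyl_op P ->
  weyl_op (fun f u => c * shift a (P f) u).
Proof.
move=> [s hs]; exists (map (fun x => (c * x.1.1, a + x.1.2, x.2)) s) => f u.
rewrite /shift hs big_map mulr_sumr; apply: eq_bigr => x _.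
by rewrite /term /shift /= opprD addrA mulrA.
Qed.

Lemma W_opp (P : ser d -> ser d) : weyl_op P -> weyl_op (fun f u => - P f u).
Proof.
move=> WP; apply: W_ext (W_scale_shift (-1) 0 WP) => f u.
by rewrite /shift subr0 mulN1r.
Qed.

Lemma W_sub (P Q : ser d -> ser d) : weyl_op P -> weyl_op Q ->
  weyl_op (fun f u => P f u - Q f u).
Proof. by move=> WP WQ; apply: W_add => //; exact: W_opp. Qed.

Lemma W_sum (X : Type) (r : seq X) (G : X -> ser d -> ser d) :
  (forall x, weyl_op (G x)) -> weyl_op (fun f u => \sum_(x <- r) G x f u).
Proof.
move=> WG; elim: r => [|x r IH].
  by apply: W_ext W_zero => f u; rewrite big_nil.
apply: W_ext (W_add (WG x) IH) => f u; by rewrite big_cons.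
Qed.

Lemma W_id : weyl_op (fun f : ser d => f).
Proof.
exists [:: (1, 0, fun _ => 0%N)] => f u.
rewrite big_seq1 /= /shift pderpow_cf subr0 /cb big1 ?mul1r; last by move=> i _; rewrite big_ord0.
by rewrite /bv; congr f; apply/rowP => j; rewrite !mxE addr0.
Qed.

Lemma W_shift (a : 'rV[int]_d) : weyl_op (shift a).
Proof.
apply: W_ext (W_scale_shift 1 a W_id) => f u; by rewrite mul1r.
Qed.

Definition bsucc (b : 'I_d -> nat) (i : 'I_d) := fun j => (b j + (j == i))%N.

Lemma bv_succ b i : bv (bsucc b i) = bv b + ev i.
Proof. apply/rowP => j; rewrite !mxE /bsucc PoszD; congr (_ + _); by case: (j == i). Qed.

Lemma cb_succ b i v : cb (bsucc b i) v = (v 0 i + 1)%:~R * cb b (v + ev i).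
Proof.
rewrite /cb (bigD1 i) //= [in RHS](bigD1 i) //= mulrA; congr (_ * _).
  rewrite /bsucc eqxx addn1 big_ord_recl /=; congr (_ * _).
  apply: eq_bigr => k _; rewrite mxE ev_entry eqxx /bump /= add1n; congr (_%:~R); lia.
apply: eq_bigr => j /negbTE ji; rewrite /bsucc ji addn0.
by apply: eq_bigr => k _; rewrite mxE ev_entry ji addr0.
Qed.

Lemma pder_term (x : CC * 'rV[int]_d * ('I_d -> nat)) (i : 'I_d) f u :
  pder i (term x f) u =
  term (x.1.1, x.1.2, bsucc x.2 i) f u + term (x.1.1 * (x.1.2 0 i)%:~R, x.1.2 - ev i, x.2) f u.
Proof.
rewrite /pder !term_cf /= cb_succ bv_succ.
have e1 : u + ev i - x.1.2 + bv x.2 = u - x.1.2 + (bv x.2 + ev i).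
  by apply/rowP => k; rewrite !mxE; ring.
have e2 : u - (x.1.2 - ev i) + bv x.2 = u - x.1.2 + (bv x.2 + ev i).
  by apply/rowP => k; rewrite !mxE; ring.
have e3 : u - x.1.2 + ev i = u + ev i - x.1.2 by apply/rowP => k; rewrite !mxE; ring.
have e4 : u - (x.1.2 - ev i) = u + ev i - x.1.2 by apply/rowP => k; rewrite !mxE; ring.
rewrite e1 e2 e3 e4 !mxE.
rewrite !intrD intrN; ring.
Qed.

Lemma W_pder (i : 'I_d) (P : ser d -> ser d) : weyl_op P ->
  weyl_op (fun f => pder i (P f)).
Proof.
move=> [s hs].
exists (flatten (map (fun x : CC * 'rV[int]_d * ('I_d -> nat) => [:: (x.1.1, x.1.2, bsucc x.2 i);
     (x.1.1 * (x.1.2 0 i)%:~R, x.1.2 - ev i, x.2)]) s)) => f u.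
rewrite big_flatten /= big_map /pder hs mulr_sumr; apply: eq_bigr => x _.
by rewrite big_cons big_seq1 -pder_term.
Qed.

Lemma W_pderpow (b : 'I_d -> nat) (P : ser d -> ser d) : weyl_op P ->
  weyl_op (fun f => pderpow b (P f)).
Proof.
move=> WP; rewrite /pderpow; elim: (enum 'I_d) => [|i l IH] //=.
elim: (b i) => [|n IHn] //=.
exact: W_pder.
Qed.

Lemma W_comp (P Q : ser d -> ser d) : weyl_op P -> weyl_op Q ->
  weyl_op (fun f => P (Q f)).
Proof.
move=> [s hs] WQ.
have WS : weyl_op (fun f u => \sum_(x <- s) x.1.1 * shift x.1.2 (pderpow x.2 (Q f)) u).
  have := @W_sum _ s (fun (x : CC * 'rV[int]_d * ('I_d -> nat)) (f : ser d) u =>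
     x.1.1 * shift x.1.2 (pderpow x.2 (Q f)) u).
  apply => x.
  by apply: W_scale_shift; exact: W_pderpow.
by apply: W_ext WS => f u; rewrite hs.
Qed.
End Weyl.

Definition polyfun (F : nat -> CC) := exists p : {poly CC}, forall t : nat, p.[t%:R] = F t.

Lemma pf_ext F G : (forall t, F t = G t) -> polyfun G -> polyfun F.
Proof. by move=> FG [p hp]; exists p => t; rewrite hp FG. Qed.

Lemma pf_const c : polyfun (fun _ => c).
Proof. by exists c%:P => t; rewrite hornerC. Qed.

Lemma pf_lin (c0 c1 : int) : polyfun (fun t => (c0 + c1 *+ t)%:~R).
Proof.
exists (c0%:~R%:P + c1%:~R *: 'X) => t.
by rewrite hornerD hornerC hornerZ hornerX intrD rmorphMn /= mulr_natr.
Qed.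

Lemma pf_add F G : polyfun F -> polyfun G -> polyfun (fun t => F t + G t).
Proof. by move=> [p hp] [q hq]; exists (p + q) => t; rewrite hornerD hp hq. Qed.

Lemma pf_mul F G : polyfun F -> polyfun G -> polyfun (fun t => F t * G t).
Proof. by move=> [p hp] [q hq]; exists (p * q) => t; rewrite hornerM hp hq. Qed.

Lemma pf_sum (X : Type) (r : seq X) (F : X -> nat -> CC) :
  (forall x, polyfun (F x)) -> polyfun (fun t => \sum_(x <- r) F x t).
Proof.
move=> hF; elim: r => [|x r IH].
  by apply: pf_ext (pf_const 0) => t; rewrite big_nil.
by apply: pf_ext (pf_add (hF x) IH) => t; rewrite big_cons.
Qed.

Lemma pf_prod (X : Type) (r : seq X) (F : X -> nat -> CC) :
  (forall x, polyfun (F x)) -> polyfun (fun t => \prod_(x <- r) F x t).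
Proof.
move=> hF; elim: r => [|x r IH].
  by apply: pf_ext (pf_const 1) => t; rewrite big_nil.
by apply: pf_ext (pf_mul (hF x) IH) => t; rewrite big_cons.
Qed.

Lemma pf_cb d (b : 'I_d -> nat) (p q : 'rV[int]_d) :
  polyfun (fun t => cb b (p + q *+ t)).
Proof.
rewrite /cb.
apply: (@pf_ext _ (fun t => \prod_(i <- enum 'I_d) \prod_(k < b i) ((p + q *+ t) 0 i + (k.+1)%:Z)%:~R)).
  by move=> t; rewrite big_enum.
apply: pf_prod => i.
apply: (@pf_ext _ (fun t => \prod_(k <- enum 'I_(b i)) ((p 0 i + (k.+1)%:Z) + q 0 i *+ t)%:~R)).
  move=> t; rewrite big_enum /=; apply: eq_bigr => k _; congr (_%:~R).
  by rewrite !mxE mulmxnE addrAC.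
by apply: pf_prod => k; exact: pf_lin.
Qed.

Lemma mem_le_sumn (l : seq nat) x : x \in l -> (x <= sumn l)%N.
Proof.
elim: l => [//|y l IH] /=; rewrite inE => /orP [/eqP ->|xl]; first exact: leq_addr.
by apply: leq_trans (IH xl) _; exact: leq_addl.
Qed.

Lemma pf_roots F : polyfun F -> (forall N, exists t, (N <= t)%N /\ F t = 0) ->
  forall t, F t = 0.
Proof.
move=> [p hp] inf t; rewrite -hp.
have [->|p0] := eqVneq p 0; first by rewrite horner0.
have lists n : exists l : seq nat, [/\ size l = n, uniq l & forall x, x \in l -> F x = 0].
  elim: n => [|n [l [sl ul rl]]]; first by exists [::].
  have [t0 [t0N Ft0]] := inf (sumn l).+1.
  exists (t0 :: l); split => //=; first by rewrite sl.
    rewrite ul andbT; apply/negP => /mem_le_sumn; rewrite leqNgt.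
    by move/negP; apply.
  by move=> x; rewrite inE => /orP [/eqP ->|]; [|exact: rl].
have [l [sl ul rl]] := lists (size p).
pose rs := map (fun x : nat => x%:R : CC) l.
have A1 : all (root p) rs.
  by apply/allP => y /mapP [x xl ->]; rewrite /root hp rl.
have U : uniq rs.
  rewrite map_inj_uniq // => x y /eqP; by rewrite eqr_nat => /eqP.
by have := max_poly_roots p0 A1 U; rewrite size_map sl ltnn.
Qed.

Section Key.
Variable d : nat.
Variable A : seq 'rV[int]_d.

Definition Sset (u : 'rV[int]_d) :=
  forall w, facet_form A w -> exists v, in_NA A v /\ lform w v = lform w u.

Definition delta (v : 'rV[int]_d) : ser d := fun u => (u == v)%:R.

Lemma in_NA_add v w : in_NA A v -> in_NA A w -> in_NA A (v + w).
Proof.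
move=> [c ->] [c' ->]; exists (fun i => (c i + c' i)%N).
by rewrite -big_split; apply: eq_bigr => i _; rewrite mulrnDr.
Qed.

Lemma weyl_delta (s : seq (CC * 'rV[int]_d * ('I_d -> nat))) P :
  (forall f u, P f u = \sum_(x <- s) x.1.1 * shift x.1.2 (pderpow x.2 f) u) ->
  forall z g, P (delta z) (z + g) =
   \sum_(x <- s) x.1.1 * cb x.2 (z + g - x.1.2) * (g - x.1.2 + bv x.2 == 0)%:R.
Proof.
move=> hs z g; rewrite hs; apply: eq_bigr => x _.
rewrite /shift pderpow_cf /delta mulrA; congr (_ * _%:R).
rewrite -subr_eq0; congr (_ == 0); apply/rowP => k; rewrite !mxE; ring.
Qed.

Lemma in_RA_delta z : in_NA A z -> in_RA A (delta z).
Proof.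
move=> zNA; split.
  by exists [:: z] => w; rewrite /delta inE; case: (w == z); rewrite /= ?eqxx.
move=> w; rewrite /delta; have [-> //|wz] := eqVneq w z; by rewrite /= eqxx.
Qed.

Lemma key_vanish P y u : DRA A P -> Sset y -> ~ Sset u -> P (delta y) u = 0.
Proof.
move=> [[s hs] PRA] Sy nSu.
have [F [fF Fnot]] : exists F, facet_form A F /\
    forall v, in_NA A v -> lform F v <> lform F u.
  apply: NNPP => H; apply: nSu => w fw; apply: NNPP => H2; apply: H.
  exists w; split => // v vNA vE; apply: H2; by exists v.
have [v0 [v0NA v0F]] := Sy F fF.
pose g := u - y.
pose h z := P (delta z) (z + g).
have h0 z : in_NA A z -> lform F z = lform F y -> h z = 0.
  move=> zNA zF; apply: NNPP => hz.
  have [_ supp] := PRA _ (in_RA_delta zNA).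
  have := supp (z + g) (introN eqP hz) => zgNA.
  apply: (Fnot _ zgNA); rewrite lformD /g lformB zF; ring.
have hpf p q : polyfun (fun t => h (p + q *+ t)).
  have := @pf_sum _ s (fun x t => x.1.1 * cb x.2 ((p + g - x.1.2) + q *+ t) *
     (g - x.1.2 + bv x.2 == 0)%:R).
  move=> H; apply: pf_ext (H _).
    move=> t; rewrite /h (weyl_delta hs); apply: eq_bigr => x _.
    congr (_ * cb _ _ * _); apply/rowP => k; rewrite !mxE mulmxnE; ring.
  move=> x; apply: pf_mul (pf_const _); apply: pf_mul (pf_const _) _; exact: pf_cb.
have Fyv : lform F (y - v0) = 0 by rewrite lformB v0F subrr.
have [m [m0 [zc [zc0 zcE]]]] := finite_index fF Fyv.
pose bb (i : 'I_(size A)) : int := if lform F A`_i == 0 then 1 else 0.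
pose cvec := \sum_(i < size A) A`_i *~ bb i.
pose Kn := (\sum_(i < size A) `|zc i|%N)%N.
have zcK i : (`|zc i|%N <= Kn)%N.
  by rewrite /Kn (bigD1 i) //= leq_addr.
have [cv cvE] := v0NA.
pose pt n k := v0 + (y - v0) *+ (m * n) + cvec *+ k.
have ptE n k : pt n k = \sum_(i < size A) A`_i *~ ((cv i)%:Z + zc i * n%:Z + bb i * k%:Z).
  rewrite /pt mulrnA zcE cvE /cvec -!sumrMnl -!big_split /=.
  by apply: eq_bigr => i _; rewrite !mulrzDr !pmulrn -!mulrzA.
have pt_NA n k : (n * Kn <= k)%N -> in_NA A (pt n k) /\ lform F (pt n k) = lform F y.
  move=> nk; split.
    rewrite ptE; apply: in_NA_of => i.
    rewrite /bb; case: ifP => [_|/negbT Fi]; last by rewrite zc0 // mul0r mul0r !addr0.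
    have := zcK i; have := lez_abs (- zc i); rewrite abszN => h1 h2.
    nia.
  rewrite /pt !lformD lformMn Fyv mul0rn addr0 lformMn /cvec lform_sum.
  rewrite big1 ?mul0rn ?addr0 // => i _; rewrite lformMz /bb.
  by case: ifP => [/eqP ->|_]; rewrite ?mul0r ?mulr0.
have step1 n : h (v0 + (y - v0) *+ (m * n)) = 0.
  have := @pf_roots (fun k => h ((v0 + (y - v0) *+ (m * n)) + cvec *+ k)) (hpf _ _) _ 0%N.
  rewrite mulr0n addr0; apply => N; exists (N + n * Kn)%N; split; first exact: leq_addr.
  have [NA FE] := pt_NA n (N + n * Kn)%N (leq_addl _ _).
  exact: h0.
have := @pf_roots (fun t => h (v0 + (y - v0) *+ t)) (hpf _ _) _ 1%N.
have -> : v0 + (y - v0) *+ 1 = y by rewrite mulr1n addrC subrK.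
have -> : h y = P (delta y) u by rewrite /h /g addrC subrK.
apply => N.
exists (m * N)%N; split; first by rewrite leq_pmull.
exact: step1.
Qed.
End Key.

Section Stab.
Variable d : nat.
Variable A : seq 'rV[int]_d.

Definition inCS (f : ser d) :=
  (exists sf : seq 'rV[int]_d, forall u, f u != 0 -> u \in sf) /\
  (forall u, f u != 0 -> Sset A u).

Lemma sum_delta (r : seq 'rV[int]_d) (f : ser d) v : uniq r ->
  \sum_(y <- r) f y * delta y v = if v \in r then f v else 0.
Proof.
elim: r => [|y r IH] /=; first by rewrite big_nil.
move=> /andP [yr ur]; rewrite big_cons IH // inE /delta.
have [->|vy] := eqVneq v y; first by rewrite (negbTE yr) mulr1 addr0.
by rewrite mulr0 add0r.
Qed.

Lemma P_lin (s : seq (CC * 'rV[int]_d * ('I_d -> nat))) P :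
  (forall f u, P f u = \sum_(x <- s) x.1.1 * shift x.1.2 (pderpow x.2 f) u) ->
  forall f sf, (forall u, f u != 0 -> u \in sf) ->
  forall u, P f u = \sum_(y <- undup sf) f y * P (delta y) u.
Proof.
move=> hs f sf hsf u.
rewrite hs.
have fE v : f v = \sum_(y <- undup sf) f y * delta y v.
  rewrite sum_delta ?undup_uniq // mem_undup.
  by case: ifP => // vs; apply/eqP; apply: contraFT vs => /hsf.
under eq_bigr do rewrite /shift pderpow_cf fE mulr_sumr mulr_sumr.
rewrite exchange_big /=; apply: eq_bigr => y _.
rewrite hs mulr_sumr; apply: eq_bigr => x _.
by rewrite /shift pderpow_cf; ring.
Qed.

Lemma stable P f : DRA A P -> inCS f -> inCS (P f).
Proof.
move=> DP; have [[s hs] PRA] := DP; move=> [[sf hsf] fS]; split.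
  pose gs := map (fun x : CC * 'rV[int]_d * ('I_d -> nat) => x.1.2 - bv x.2) s.
  exists [seq v + g | v <- sf, g <- gs] => u Pu.
  pose x0 : CC * 'rV[int]_d * ('I_d -> nat) := (0, 0, fun _ => 0%N).
  have [i xnz] : exists i : 'I_(size s),
      (nth x0 s i).1.1 * shift (nth x0 s i).1.2 (pderpow (nth x0 s i).2 f) u != 0.
    apply: NNPP => H; move: Pu; rewrite hs (big_nth x0) big_mkord big1 ?eqxx // => i _.
    by apply/eqP; apply: contraT => nz; exfalso; apply: H; exists i.
  set x := nth x0 s i in xnz.
  move: xnz; rewrite /shift pderpow_cf => xnz.
  have fnz : f (u - x.1.2 + bv x.2) != 0.
    by apply: contraNneq xnz => ->; rewrite !mulr0.
  have -> : u = (u - x.1.2 + bv x.2) + (x.1.2 - bv x.2).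
    by apply/rowP => k; rewrite !mxE; ring.
  apply: allpairs_f; first exact: hsf.
  have -> : x.1.2 - bv x.2 = nth 0 gs i by rewrite /gs (nth_map x0).
  by rewrite mem_nth // size_map.
move=> u Pu; apply: NNPP => nSu; move: Pu.
rewrite (P_lin hs hsf) big1_seq ?eqxx // => y /andP [_ ys].
have [->|fy] := eqVneq (f y) 0; first by rewrite mul0r.
by rewrite (key_vanish DP (fS y fy) nSu) mulr0.
Qed.
End Stab.

Lemma in_RA0 d (A : seq 'rV[int]_d) : in_RA A (fun _ => 0).
Proof. by split; [exists [::] => u; rewrite eqxx | move=> u; rewrite eqxx]. Qed.

Lemma in_RA_sub d (A : seq 'rV[int]_d) (f g : ser d) :
  in_RA A f -> in_RA A g -> in_RA A (fun u => f u - g u).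
Proof.
move=> [[sf hf] Nf] [[sg hg] Ng]; split.
  exists (sf ++ sg) => u nz; rewrite mem_cat.
  have [f0|fn] := eqVneq (f u) 0.
    by rewrite (hg u) ?orbT //; apply: contraNneq nz => g0; rewrite f0 g0 subrr.
  by rewrite hf.
move=> u nz; have [f0|fn] := eqVneq (f u) 0; last exact: Nf.
by apply: Ng; apply: contraNneq nz => g0; rewrite f0 g0 subrr.
Qed.

Unset Implicit Arguments.
Theorem proposition8p5 (d : nat) (A : seq 'rV[int]_d) :
  generates_group A -> DRA_simple A -> scored A.
Proof.
move=> gen simple; apply: NNPP => nsc.
have [u0 [nu0 Su0]] : exists u0, ~ in_NA A u0 /\ Sset A u0.
  apply: NNPP => H; apply: nsc => u; split.
    by move=> uNA w _; exists u.
  move=> Su; apply: NNPP => nu; apply: H; exists u; split => //.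
have [b [bNA bcond]] := conductor gen.
pose I := fun P : ser d -> ser d => DRA A P /\ forall f, inCS A f -> in_RA A (P f).
have DRA0 : DRA A (fun _ _ => 0) by split; [exact: W_zero | move=> f _; exact: in_RA0].
have DRA_sub P Q : DRA A P -> DRA A Q -> DRA A (fun f u => P f u - Q f u).
  move=> [WP RP] [WQ RQ]; split; first exact: W_sub.
  by move=> f fR; apply: in_RA_sub; [exact: RP | exact: RQ].
have DRA_comp P Q : DRA A P -> DRA A Q -> DRA A (fun f => P (Q f)).
  move=> [WP RP] [WQ RQ]; split; first exact: W_comp.
  by move=> f fR; apply: RP; exact: RQ.
have ideal : two_sided_ideal A I.
  split.
  - by move=> P [].
  - by split => // f _; exact: in_RA0.
  - move=> P Q [DP IP] [DQ IQ]; split; first exact: DRA_sub.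
    by move=> f fC; apply: in_RA_sub; [exact: IP | exact: IQ].
  - move=> P Q DP [DQ IQ]; split; split.
    + exact: DRA_comp.
    + by move=> f fC; apply: DP.2; exact: IQ.
    + exact: DRA_comp.
    + by move=> f fC; apply: IQ; exact: stable.
have shift_fin (f : ser d) : (exists sf : seq 'rV[int]_d, forall u, f u != 0 -> u \in sf) ->
    exists sf : seq 'rV[int]_d, forall u, shift b f u != 0 -> u \in sf.
  move=> [sf hsf]; exists (map (fun v : 'rV[int]_d => v + b) sf) => u hu.
  by apply/mapP; exists (u - b); [exact: hsf | rewrite subrK].
case: (simple I ideal) => [H|H].
  have Ish : I (shift b).
    split; first split.
    - exact: W_shift.
    - move=> f [fin fNA]; split; first exact: shift_fin.
      by move=> u hu; rewrite -(subrK b u); apply: in_NA_add; [exact: fNA | exact: bNA].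
    - move=> f [fin fS]; split; first exact: shift_fin.
      move=> u hu; rewrite -(subrK b u); apply: bcond.
      by apply: scored_in_cone gen _ (fS _ hu).
  have := congr1 (fun P : ser d -> ser d => P (delta 0) b) (H _ Ish).
  by rewrite /= /shift /delta subrr eqxx => /eqP; rewrite oner_eq0.
have DRAid : DRA A (fun f => f) by split; [exact: W_id | by []].
have [_ Iid] := H _ DRAid.
have Cu0 : inCS A (delta u0).
  split; first by exists [:: u0] => u; rewrite /delta inE; case: (u == u0); rewrite /= ?eqxx.
  move=> u; rewrite /delta; have [-> //|uu] := eqVneq u u0; by rewrite /= eqxx.
have [_ supp] := Iid _ Cu0.
by apply: nu0; apply: supp; rewrite /delta eqxx oner_eq0.
Qed.
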